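(* Let $U$ be a finite ground set partitioned as $\mathcal{P}=\{U_1,\dots,U_N\}$, let $\kappa\in\mathbb{N}$, $\vec l,\vec u\in\mathbb{N}^N$, let $\beta\in\mathbb{N}_+$, and let $\mathcal{M}_\beta$ be the $\beta$-extension of $\mathcal{M}_{fair}(\mathcal{P},\kappa,\vec l,\vec u)$. Then for any $S\in\mathcal{M}_\beta$ with $|S|=\beta\kappa$, any $T\in\mathcal{M}_{fair}(\mathcal{P},\kappa,\vec l,\vec u)$ with $|T|=\kappa$, and any ordering $S=(s_1,\dots,s_{\beta\kappa})$ of $S$, there exists a sequence $E=(e_1,\dots,e_{\beta\kappa})$ in which each element of $T$ appears exactly $\beta$ times, such that $S_i\cup\{e_{i+1}\}\in\mathcal{M}_\beta$ for all $i\in\{0,1,\dots,\beta\kappa-1\}$, where $S_i=\{s_1,\dots,s_i\}$ and $S_0=\emptyset$.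
   Context: Fairness matroid: $\mathcal{M}_{fair}(\mathcal{P},\kappa,\vec l,\vec u)=\{S\subseteq U: |S\cap U_c|\le u_c\ \forall c\in[N],\ \sum_{c\in[N]}\max\{|S\cap U_c|,l_c\}\le\kappa\}$. Its $\beta$-extension is $\mathcal{M}_\beta=\mathcal{M}_{fair}(\mathcal{P},\beta\kappa,\beta\vec l,\beta\vec u)=\{S\subseteq U: |S\cap U_c|\le\beta u_c\ \forall c,\ \sum_c\max\{|S\cap U_c|,\beta l_c\}\le\beta\kappa\}$. *)

(* Defs.v *)
From mathcomp Require Import all_boot.
Set Implicit Arguments. Unset Strict Implicit. Unset Printing Implicit Defensive.

(* The partition P = {U_1,...,U_N} of the finite ground set U is given by a
   colour map [col : U -> 'I_N]; U_c = [set x | col x == c]. *)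
Definition part (U : finType) (N : nat) (col : U -> 'I_N) (c : 'I_N) : {set U} :=
  [set x | col x == c].

Definition fair (U : finType) (N : nat) (col : U -> 'I_N)
    (kappa : nat) (l u : 'I_N -> nat) (S : {set U}) : bool :=
  [forall c : 'I_N, #|S :&: part col c| <= u c] &&
  (\sum_(c < N) maxn #|S :&: part col c| (l c) <= kappa).

Definition fair_ext (U : finType) (N : nat) (col : U -> 'I_N)
    (kappa : nat) (l u : 'I_N -> nat) (beta : nat) (S : {set U}) : bool :=
  fair col (beta * kappa) (fun c => beta * l c) (fun c => beta * u c) S.

(* Main.v *)
Require Import Defs.
From mathcomp Require Import all_boot zify.

Section Aux.
Variables (U : finType) (N : nat) (col : U -> 'I_N).

Definition cnt (c : 'I_N) (r : seq U) := count (fun x => col x == c) r.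

Lemma sum_eq1 (c1 : 'I_N) : \sum_(c < N) (c1 == c) = 1.
Proof.
rewrite (bigD1 c1) //= eqxx big1 ?addn0 // => c Hc.
by rewrite eq_sym (negbTE Hc).
Qed.

Lemma sum_cnt r : \sum_(c < N) cnt c r = size r.
Proof.
elim: r => [|x r IH] /=; first by rewrite big1.
rewrite /cnt /= big_split /= sum_eq1. by rewrite -IH.
Qed.

Lemma card_part_uniq r c : uniq r -> #|[set x in r] :&: part col c| = cnt c r.
Proof.
move=> Hu.
have -> : [set x in r] :&: part col c = [set x in filter (fun x => col x == c) r].
  by apply/setP=> x; rewrite /part !inE mem_filter andbC.
by rewrite cardsE (card_uniqP _) ?filter_uniq // size_filter.
Qed.

Lemma pointwise (f g : 'I_N -> nat) :
  (forall c, f c <= g c) -> \sum_(c < N) g c <= \sum_(c < N) f c -> forall c, g c = f c.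
Proof.
move=> Hle Hs c; have := Hle c.
rewrite (bigD1 c) //= [X in _ <= X](bigD1 c) //= in Hs.
have : \sum_(i < N | i != c) f i <= \sum_(i < N | i != c) g i by apply: leq_sum.
move: Hs.
move: (\sum_(i < N | i != c) f i) (\sum_(i < N | i != c) g i) => A B.
lia.
Qed.

Lemma fair_bound (q p a L Uu : 'I_N -> nat) (K : nat) (c1 c2 : 'I_N) :
 (forall c, q c <= p c + (c1 == c)) -> (forall c, p c + (c2 == c) <= a c) ->
 (forall c, a c <= Uu c) -> \sum_(c < N) maxn (a c) (L c) <= K -> \sum_(c < N) a c = K ->
 (c1 == c2) || ((L c2 < a c2) && (a c1 < Uu c1)) ->
 (forall c, q c <= Uu c) /\ \sum_(c < N) maxn (q c) (L c) <= K.
Proof.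
move=> Hq Hp Ha Hs Hsum Hcase.
have HL : forall c, L c <= a c.
  move=> c; have := pointwise a (fun c => maxn (a c) (L c)).
  move=> /(_ _ _ c) H. rewrite -(H _ _); [lia | move=> ?; lia | by rewrite Hsum].
case: (eqVneq c1 c2) Hcase Hp => [<- _ Hp | Hne /= /andP [HX HY] Hp].
  have Hqa : forall c, q c <= a c by move=> c; have := Hq c; have := Hp c; lia.
  split; first by move=> c; apply: leq_trans (Hqa c) (Ha c).
  apply: leq_trans Hs; apply: leq_sum => c _; have := Hqa c; lia.
split.
  move=> c; have := Hq c; have := Hp c; have := Ha c.
  case: (eqVneq c1 c) => [<-|_]; case: (eqVneq c2 c1) => //= _; lia.
have : \sum_(c < N) (maxn (q c) (L c) + (c2 == c)) <= \sum_(c < N) (a c + (c1 == c)).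
  apply: leq_sum => c _; have := Hq c; have := Hp c; have := HL c.
  move: HX HY.
  case: (eqVneq c1 c) => [E1|N1]; case: (eqVneq c2 c) => [E2|N2].
  - by rewrite E1 E2 eqxx in Hne.
  - subst; lia.
  - subst; lia.
  - lia.
rewrite !big_split /= !sum_eq1 Hsum leq_add2r => H; exact: H.
Qed.

Definition okp (X Y : pred 'I_N) (a e : U) :=
  (col e == col a) || (X (col a) && Y (col e)).

Lemma greedy (X Y : pred 'I_N) cs : forall R : seq U, size R = size cs ->
  (forall c, ~~ X c -> cnt c cs <= cnt c R) ->
  (forall c, ~~ Y c -> cnt c R <= cnt c cs) ->
  exists E, perm_eq E R /\ forall x0 i, i < size cs -> okp X Y (nth x0 cs i) (nth x0 E i).
Proof.
elim: cs => [|a cs IH] R.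
  move=> /size0nil -> _ _; exists [::]; split => //.
move=> Hsz H1 H2.
have cntR : forall e c, e \in R -> cnt c R = cnt c (rem e R) + (col e == c).
  move=> e c He; rewrite /cnt (permP (perm_to_rem He)) /=; lia.
have cntA : forall c, cnt c (a :: cs) = (col a == c) + cnt c cs by [].
case: (boolP (has (fun x => col x == col a) R)) => [/hasP [e He /eqP Hce] | Hn].
  have P1 : size (rem e R) = size cs by rewrite size_rem // Hsz.
  have P2 : forall c, ~~ X c -> cnt c cs <= cnt c (rem e R).
    move=> c /H1; rewrite (cntR e c He) cntA Hce; case: (col a == c); lia.
  have P3 : forall c, ~~ Y c -> cnt c (rem e R) <= cnt c cs.
    move=> c /H2; rewrite (cntR e c He) cntA Hce; case: (col a == c); lia.
  have [E [HE Hok]] := IH (rem e R) P1 P2 P3.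
  exists (e :: E); split.
    by rewrite perm_sym (permPl (perm_to_rem He)) perm_cons perm_sym.
  move=> x0 [|i] /= Hi; first by rewrite /okp Hce eqxx.
  exact: Hok.
have Hca : cnt (col a) R = 0 by move: Hn; rewrite has_count /cnt; lia.
have HXa : X (col a).
  apply/negPn/negP => /H1; rewrite Hca cntA eqxx; lia.
case: (boolP [exists c, cnt c (a :: cs) < cnt c R]) => [/existsP [c Hc] | /existsPn Hall].
  have : has (fun x => col x == c) R by rewrite has_count; move: Hc; rewrite /cnt; lia.
  move=> /hasP [e He /eqP Hce].
  have HYc : Y c by apply/negPn/negP => /H2; lia.
  have Hne : col a != c by apply/eqP => Heq; move: Hc; rewrite -Heq Hca.
  have P1 : size (rem e R) = size cs by rewrite size_rem // Hsz.
  have P2 : forall c, ~~ X c -> cnt c cs <= cnt c (rem e R).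
    move=> c' Hc'; have := H1 _ Hc'; rewrite (cntR e c' He) cntA Hce.
    have Hac' : (col a == c') = false by apply/negbTE/eqP => Heq; rewrite -Heq HXa in Hc'.
    rewrite Hac'; case: (eqVneq c c') => [<-|_] /=; last lia.
    move: Hc; rewrite (cntR e c He) cntA Hce (negbTE Hne); lia.
  have P3 : forall c, ~~ Y c -> cnt c (rem e R) <= cnt c cs.
    move=> c' Hc'; have := H2 _ Hc'; rewrite (cntR e c' He) cntA Hce.
    have Hcc' : (c == c') = false by apply/negbTE/eqP => Heq; rewrite -Heq HYc in Hc'.
    rewrite Hcc'; case: (eqVneq (col a) c') => [<-|_] /=; last lia.
    move: Hca; rewrite (cntR e _ He); lia.
  have [E [HE Hok]] := IH (rem e R) P1 P2 P3.
  exists (e :: E); split.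
    by rewrite perm_sym (permPl (perm_to_rem He)) perm_cons perm_sym.
  move=> x0 [|i] /= Hi; first by rewrite /okp Hce HXa HYc orbT.
  exact: Hok.
exfalso.
have := pointwise (fun c => cnt c R) (fun c => cnt c (a :: cs)).
move=> /(_ _ _ (col a)); rewrite Hca cntA eqxx.
move=> H; suff : 1 + cnt (col a) cs = 0 by [].
apply: H.
  by move=> c; have := Hall c; rewrite -leqNgt.
by rewrite !sum_cnt Hsz.
Qed.

End Aux.
Arguments cnt {U N} col c r.
Arguments card_part_uniq {U N} col r c.
Arguments sum_cnt {U N} col r.
Arguments greedy {U N} col X Y cs R.
Arguments pointwise {N} f g.

Lemma count_rep (U : finType) (P : pred U) (m : nat) (r : seq U) :
  count P (flatten (nseq m r)) = m * count P r.
Proof. elim: m => [|m IH] //=; rewrite count_cat IH mulSn. by []. Qed.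

Theorem lemma2 (U : finType) (N : nat) (col : U -> 'I_N)
    (Hpart : forall c : 'I_N, exists x : U, col x = c)
    (kappa : nat) (l u : 'I_N -> nat) (beta : nat) (Hbeta : 0 < beta)
    (S T : {set U})
    (HS : fair_ext col kappa l u beta S) (HSsz : #|S| = beta * kappa)
    (HT : fair col kappa l u T) (HTsz : #|T| = kappa)
    (s : (beta * kappa).-tuple U)
    (Hs_uniq : uniq s) (Hs_S : [set x in s] = S) :
  exists E : (beta * kappa).-tuple U,
    (forall x, x \in T -> count_mem x E = beta) /\
    (forall i : 'I_(beta * kappa),
       fair_ext col kappa l u beta
         ([set tnth s j | j : 'I_(beta * kappa) & (j < i)%N] :|: [set tnth E i])).
Proof.
have Hsz_s : size s = beta * kappa := size_tuple s.
have HSa : forall c, #|S :&: part col c| = cnt col c s.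
  by move=> c; rewrite -Hs_S; apply: card_part_uniq.
have HTc : forall c, #|T :&: part col c| = cnt col c (enum T).
  move=> c; rewrite {1}(_ : T = [set x in enum T]); last first.
    by apply/setP => x; rewrite inE mem_enum.
  by apply: card_part_uniq; apply: enum_uniq.
move: HS; rewrite /fair_ext /fair => /andP [/forallP HSu HSl].
move: HT; rewrite /fair => /andP [/forallP HTu HTl].
have HSu' : forall c, cnt col c s <= beta * u c by move=> c; rewrite -HSa; apply: HSu.
have HSl' : \sum_(c < N) maxn (cnt col c s) (beta * l c) <= beta * kappa.
  apply: leq_trans HSl; rewrite leq_eqVlt; apply/orP; left; apply/eqP.
  by apply: eq_bigr => c _; rewrite HSa.
have HTu' : forall c, cnt col c (enum T) <= u c by move=> c; rewrite -HTc; apply: HTu.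
have HTl' : forall c, l c <= cnt col c (enum T).
  move=> c.
  have H := pointwise (fun c => cnt col c (enum T)) (fun c => maxn (cnt col c (enum T)) (l c)).
  have Hs : \sum_(c < N) maxn (cnt col c (enum T)) (l c) <= \sum_(c < N) cnt col c (enum T).
    rewrite sum_cnt -cardE HTsz; apply: leq_trans HTl; rewrite leq_eqVlt; apply/orP; left; apply/eqP.
    by apply: eq_bigr => c' _; rewrite HTc.
  have := H (fun c => leq_maxl _ _) Hs c.
  move=> <-; exact: leq_maxr.
pose R := flatten (nseq beta (enum T)).
have HRsz : size R = size s by rewrite -count_predT count_rep count_predT -cardE HTsz Hsz_s.
have HRc : forall c, cnt col c R = beta * cnt col c (enum T) by move=> c; rewrite /cnt count_rep.
have I1 : forall c, ~~ (beta * l c < cnt col c s) -> cnt col c s <= cnt col c R.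
  move=> c; rewrite -leqNgt HRc => H; apply: leq_trans H _.
  by rewrite leq_mul2l HTl' orbT.
have I2 : forall c, ~~ (cnt col c s < beta * u c) -> cnt col c R <= cnt col c s.
  move=> c; rewrite -leqNgt HRc => H; apply: leq_trans _ H.
  by rewrite leq_mul2l HTu' orbT.
have [E [HE Hok]] := greedy col (fun c => beta * l c < cnt col c s)
   (fun c => cnt col c s < beta * u c) s R HRsz I1 I2.
have HszE : size E == beta * kappa by rewrite (perm_size HE) HRsz Hsz_s.
exists (Tuple HszE); split.
  move=> x Hx; rewrite /= (permP HE) count_rep count_uniq_mem ?enum_uniq //.
  by rewrite mem_enum Hx muln1.
move=> i.
have Hi : i < size s by rewrite Hsz_s.
set a := tnth s i.
set e := tnth (Tuple HszE) i.
have Hea : e = nth a E i by rewrite /e (tnth_nth a).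
have Haa : a = nth a s i by rewrite /a {1}(tnth_nth a).
have HokI := Hok a i Hi; rewrite -Hea -Haa in HokI.
set P := [set tnth s j | j : 'I_(beta * kappa) & (j < i)%N].
have Hsub : P \subset [set x in take i s].
  apply/subsetP => x /imsetP [j]; rewrite inE => Hj ->; rewrite inE (tnth_nth x).
  rewrite -(nth_take _ Hj); apply: mem_nth; rewrite size_takel //.
  by rewrite Hsz_s ltnW.
have Hq : forall c, #|(P :|: [set e]) :&: part col c| <= cnt col c (take i s) + (col e == c).
  move=> c; rewrite setIUl cardsU; apply: leq_trans (leq_subr _ _) _.
  apply: leq_add.
    rewrite -card_part_uniq; last by apply: take_uniq.
    by apply: subset_leq_card; apply: setSI.
  case H: (col e == c).
    by apply: leq_trans (subset_leq_card (subsetIl _ _)) _; rewrite cards1.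
  rewrite leqn0 cards_eq0; apply/eqP/setP => x; rewrite !inE.
  by case: (eqVneq x e) => [->|] //=; rewrite H.
have Hp : forall c, cnt col c (take i s) + (col a == c) <= cnt col c s.
  move=> c; have -> : cnt col c s = cnt col c (take i s ++ drop i s) by rewrite cat_take_drop.
  rewrite (drop_nth a) // /cnt count_cat /= -Haa; lia.
have Hsum : \sum_(c < N) cnt col c s = beta * kappa by rewrite sum_cnt.
have [H1 H2] := @fair_bound N (fun c => #|(P :|: [set e]) :&: part col c|)
  (fun c => cnt col c (take i s)) (fun c => cnt col c s) (fun c => beta * l c)
  (fun c => beta * u c) (beta * kappa) (col e) (col a) Hq Hp HSu' HSl' Hsum HokI.
rewrite /fair_ext /fair; apply/andP; split; last exact: H2.
by apply/forallP => c; apply: H1.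
Qed.
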